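(* The enumeration of all maximal satisfying assignments of antimonotone Boolean formulas in conjunctive normal form is equivalent to \textsc{Transversal Hypergraph} under parsimonious reductions. In particular, there is a parsimonious reduction from \textsc{Transversal Hypergraph} to \textsc{Enumerate Maximal Satisfying WA3NS Assignments}.
   Context: A Boolean formula is antimonotone if all its literals are negative; it is 3-normalized if it is a conjunction of disjunctions of conjunctions of literals. Assignments are identified with the sets of variables set to true; a satisfying assignment is maximal if no proper superset of it is satisfying. A hypergraph is a non-empty finite vertex set $V$ with edges $\mathcal{H}\subseteq\mathcal{P}(V)$; $\mathrm{Tr}(\mathcal{H})$ is the set of inclusion-minimal sets $T\subseteq V$ meeting every edge. \textsc{Transversal Hypergraph}: given $(V,\mathcal{H})$, list $\mathrm{Tr}(\mathcal{H})$. \textsc{Enumerate Maximal Satisfying WA3NS Assignments}: given an antimonotone 3-normalized formula, list all its maximal satisfying assignments. An enumeration problem maps each instance $I$ to a finite solution set $\Pi(I)$; a parsimonious reduction from $\Pi$ to $\Pi'$ is a pair of polynomial-time computable functions $f,g$ such that for every instance $I$, $g(I,\cdot)$ is a bijection from $\Pi'(f(I))$ to $\Pi(I)$. *)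

(* Defs.v *)
From mathcomp Require Import all_boot.
Set Implicit Arguments. Unset Strict Implicit. Unset Printing Implicit Defensive.

(* Polynomial-time computability: Cobham's machine-independent class FP of   *)
(* functions on binary words (successors prepend a bit; recursion on         *)
(* notation on the first bit; limited by a bound already in the class).      *)
(* A k-ary function is a function on seq word, meaningful on lists of size k.*)
Definition word := seq bool.

Inductive FP : nat -> (seq word -> word) -> Prop :=
| FP_zero k : FP k (fun _ => [::])
| FP_succ (b : bool) : FP 1 (fun xs => b :: nth [::] xs 0)
| FP_proj k i : i < k -> FP k (fun xs => nth [::] xs i)
| FP_smash : FP 2 (fun xs => nseq (size (nth [::] xs 0) * size (nth [::] xs 1)) true)
| FP_comp k m (h : seq word -> word) (gs : nat -> seq word -> word) :
    FP m h -> (forall j, j < m -> FP k (gs j)) ->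
    FP k (fun xs => h [seq gs j xs | j <- iota 0 m])
| FP_rec k (g h0 h1 bd f : seq word -> word) :
    FP k g -> FP k.+2 h0 -> FP k.+2 h1 -> FP k.+1 bd ->
    (forall ys, size ys = k -> f ([::] :: ys) = g ys) ->
    (forall x ys, size ys = k -> f ((false :: x) :: ys) = h0 [:: x, f (x :: ys) & ys]) ->
    (forall x ys, size ys = k -> f ((true :: x) :: ys) = h1 [:: x, f (x :: ys) & ys]) ->
    (forall xs, size xs = k.+1 -> size (f xs) <= size (bd xs)) ->
    FP k.+1 f
| FP_ext k (f f' : seq word -> word) :
    FP k f -> (forall xs, size xs = k -> f' xs = f xs) -> FP k f'.

(* Encodings of structured data as words (self-delimiting, injective).       *)
Definition w_open : word := [:: true; false].
Definition w_close : word := [:: false; true].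
Definition enc_nat (n : nat) : word :=
  w_open ++ flatten (nseq n [:: true; true]) ++ w_close.
Definition enc_seq (T : Type) (e : T -> word) (s : seq T) : word :=
  w_open ++ flatten (map e s) ++ w_close.
Definition enc_pair (A B : Type) (ea : A -> word) (eb : B -> word) (p : A * B) : word :=
  w_open ++ ea p.1 ++ eb p.2 ++ w_close.

Record enum_problem := EnumProblem {
  ep_inst : Type;
  ep_sol : Type;
  ep_valid : ep_inst -> Prop;
  ep_sols : ep_inst -> ep_sol -> Prop;
  ep_enc_inst : ep_inst -> word;
  ep_enc_sol : ep_sol -> word }.

Definition parsimonious_reduction (P Q : enum_problem) : Prop :=
  exists (f : ep_inst P -> ep_inst Q) (g : ep_inst P -> ep_sol Q -> ep_sol P),
    (exists F, FP 1 F /\ forall I, ep_valid I ->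
        F [:: ep_enc_inst I] = ep_enc_inst (f I)) /\
    (exists G, FP 2 G /\ forall I s', ep_valid I -> ep_sols (f I) s' ->
        G [:: ep_enc_inst I; ep_enc_sol s'] = ep_enc_sol (g I s')) /\
    forall I, ep_valid I ->
      [/\ ep_valid (f I),
          (forall s', ep_sols (f I) s' -> ep_sols I (g I s')),
          (forall s1 s2, ep_sols (f I) s1 -> ep_sols (f I) s2 ->
              g I s1 = g I s2 -> s1 = s2) &
          (forall s, ep_sols I s -> exists2 s', ep_sols (f I) s' & g I s' = s)].

(* Subsets of {0,...,n-1} are represented canonically as strictly increasing *)
(* lists of naturals < n.                                                    *)
Definition is_subset_of_range (n : nat) (A : seq nat) : bool :=
  sorted ltn A && all (fun v => v < n) A.

(* Transversal Hypergraph.  Instance (n, E): V = {0,...,n-1} (n >= 1),      *)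
(* each edge a list of vertices (read as the set of its elements).           *)
Definition hyp_inst := (nat * seq (seq nat))%type.

Definition hyp_valid (I : hyp_inst) : Prop :=
  0 < I.1 /\ all (fun e => all (fun v => v < I.1) e) I.2.

Definition is_transversal (E : seq (seq nat)) (T : seq nat) : bool :=
  all (fun e => has (fun v => v \in T) e) E.

Definition in_Tr (I : hyp_inst) (T : seq nat) : Prop :=
  [/\ is_subset_of_range I.1 T, is_transversal I.2 T &
      forall T', is_subset_of_range I.1 T' -> {subset T' <= T} ->
        is_transversal I.2 T' -> {subset T <= T'}].

Definition TransversalHypergraph : enum_problem :=
  {| ep_inst := hyp_inst; ep_sol := seq nat;
     ep_valid := hyp_valid; ep_sols := in_Tr;
     ep_enc_inst := enc_pair enc_nat (enc_seq (enc_seq enc_nat));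
     ep_enc_sol := enc_seq enc_nat |}.

(* Antimonotone 3-normalized formulas: (n, F) with variables 0..n-1;        *)
(* F = list of clauses (conjunction), clause = list of terms (disjunction),  *)
(* term = list of variables x, standing for the conjunction of literals ~x.  *)
Definition wa3ns_inst := (nat * seq (seq (seq nat)))%type.

Definition wa3ns_valid (I : wa3ns_inst) : Prop :=
  all (fun c => all (fun t => all (fun v => v < I.1) t) c) I.2.

(* assignment A = set of variables set to true *)
Definition wa3ns_sat (F : seq (seq (seq nat))) (A : seq nat) : bool :=
  all (fun c => has (fun t => all (fun v => v \notin A) t) c) F.

Definition wa3ns_maxsat (I : wa3ns_inst) (A : seq nat) : Prop :=
  [/\ is_subset_of_range I.1 A, wa3ns_sat I.2 A &
      forall A', is_subset_of_range I.1 A' -> {subset A <= A'} ->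
        wa3ns_sat I.2 A' -> {subset A' <= A}].

Definition EnumMaxSatWA3NS : enum_problem :=
  {| ep_inst := wa3ns_inst; ep_sol := seq nat;
     ep_valid := wa3ns_valid; ep_sols := wa3ns_maxsat;
     ep_enc_inst := enc_pair enc_nat (enc_seq (enc_seq (enc_seq enc_nat)));
     ep_enc_sol := enc_seq enc_nat |}.

(* Antimonotone CNF formulas: (n, F), F = list of clauses, clause = list of  *)
(* variables x, standing for the disjunction of literals ~x.                 *)
Definition acnf_inst := (nat * seq (seq nat))%type.

Definition acnf_valid (I : acnf_inst) : Prop :=
  all (fun c => all (fun v => v < I.1) c) I.2.

Definition acnf_sat (F : seq (seq nat)) (A : seq nat) : bool :=
  all (fun c => has (fun v => v \notin A) c) F.

Definition acnf_maxsat (I : acnf_inst) (A : seq nat) : Prop :=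
  [/\ is_subset_of_range I.1 A, acnf_sat I.2 A &
      forall A', is_subset_of_range I.1 A' -> {subset A <= A'} ->
        acnf_sat I.2 A' -> {subset A' <= A}].

Definition EnumMaxSatAntiCNF : enum_problem :=
  {| ep_inst := acnf_inst; ep_sol := seq nat;
     ep_valid := acnf_valid; ep_sols := acnf_maxsat;
     ep_enc_inst := enc_pair enc_nat (enc_seq (enc_seq enc_nat));
     ep_enc_sol := enc_seq enc_nat |}.

(* Main.v *)
Require Import Defs.
From mathcomp Require Import all_boot.
From mathcomp Require Import zify.
Set Implicit Arguments. Unset Strict Implicit. Unset Printing Implicit Defensive.

Definition sumsz (xs : seq word) := sumn (map size xs).

Lemma size_nth_le xs i : size (nth [::] xs i) <= sumsz xs.
Proof.
elim: xs i => [|x xs IH] [|i] //=; rewrite /sumsz /=.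
  exact: leq_addr.
by apply: leq_trans (IH i) _; exact: leq_addl.
Qed.

Lemma unif_bound m (P : nat -> nat -> Prop) :
  (forall j d d', d <= d' -> P j d -> P j d') ->
  (forall j, j < m -> exists d, P j d) -> exists D, forall j, j < m -> P j D.
Proof.
move=> mono; elim: m => [|m IH] H; first by exists 0.
have [D HD] : exists D, forall j, j < m -> P j D.
  by apply: IH => j jm; apply: H; exact: ltnW.
have [d Hd] := H m (ltnSn m).
exists (maxn D d) => j; rewrite ltnS leq_eqVlt => /orP [/eqP->|jm].
  by apply: mono Hd; exact: leq_maxr.
by apply: mono (HD j jm); exact: leq_maxl.
Qed.

Lemma sumsz_map_le (gs : nat -> word) l B :
  (forall j, j \in l -> size (gs j) <= B) ->
  sumsz (map gs l) <= size l * B.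
Proof.
elim: l => [|j l IH] H //=; rewrite /sumsz /= mulSn.
apply: leq_add; first by apply: H; rewrite inE eqxx.
by apply: IH => i il; apply: H; rewrite inE il orbT.
Qed.

Lemma exp_mono_base a b e : a <= b -> a ^ e <= b ^ e.
Proof.
move=> ab; case: e => [|e] //; by rewrite leq_exp2r.
Qed.

Lemma FP_poly k f : FP k f ->
  exists d, forall xs, size xs = k -> size (f xs) <= (sumsz xs).+2 ^ d.
Proof.
elim => {k f}.
- by move=> k; exists 0.
- move=> b; exists 1 => xs _ /=; rewrite expn1 ltnS.
  apply: leq_trans (size_nth_le xs 0) _; exact: leqnSn.
- move=> k i _; exists 1 => xs _; rewrite expn1.
  apply: leq_trans (size_nth_le xs i) _; exact: leqW (leqnSn _).
- exists 2 => xs _; rewrite size_nseq expnS expn1.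
  apply: leq_mul; apply: leq_trans (size_nth_le _ _) _; exact: leqW (leqnSn _).
- move=> k m h gs _ [dh Hh] _ Hgs.
  have mono : forall j d d', d <= d' -> (forall xs, size xs = k ->
       size (gs j xs) <= (sumsz xs).+2 ^ d) -> (forall xs, size xs = k ->
       size (gs j xs) <= (sumsz xs).+2 ^ d').
    move=> j d d' dd' H xs sx; apply: leq_trans (H xs sx) _.
    by apply: leq_pexp2l.
  have [D HD] := unif_bound mono Hgs.
  exists ((D + m.+1) * dh) => xs sx.
  have sz : size [seq gs j xs | j <- iota 0 m] = m by rewrite size_map size_iota.
  apply: leq_trans (Hh _ sz) _.
  rewrite (expnM _ (D + m.+1)); apply: exp_mono_base.
  have Hs : sumsz [seq gs j xs | j <- iota 0 m] <= m * (sumsz xs).+2 ^ D.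
    have := @sumsz_map_le (fun j => gs j xs) (iota 0 m) ((sumsz xs).+2 ^ D).
    rewrite size_iota; apply.
    by move=> j; rewrite mem_iota add0n => /andP[_ jm]; apply: HD.
  set X := (sumsz xs).+2 ^ D in Hs *.
  have X1 : 0 < X by rewrite expn_gt0.
  apply: (@leq_trans (m * X + 2)); first by rewrite addn2 !ltnS.
  rewrite expnD.
  have h2 : m.+2 <= (sumsz xs).+2 ^ m.+1.
    apply: leq_trans (_ : 2 ^ m.+1 <= _); first by apply: ltn_expl.
    by apply: exp_mono_base.
  apply: (@leq_trans (X * m.+2)); last by apply: leq_mul.
  clear -X1; nia.
- move=> k g h0 h1 bd f _ _ _ _ _ _ _ [d Hd] _ _ _ Hb.
  by exists d => xs sx; apply: leq_trans (Hb xs sx) (Hd xs sx).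
- move=> k f f' _ [d Hd] E; exists d => xs sx; rewrite E //; exact: Hd.
Qed.

Definition FP1 (T : word -> word) := FP 1 (fun xs => T (nth [::] xs 0)).
Definition FP2 (T : word -> word -> word) :=
  FP 2 (fun xs => T (nth [::] xs 0) (nth [::] xs 1)).
Definition FP3 (T : word -> word -> word -> word) :=
  FP 3 (fun xs => T (nth [::] xs 0) (nth [::] xs 1) (nth [::] xs 2)).

Lemma FP1_c k T g : FP1 T -> FP k g -> FP k (fun xs => T (g xs)).
Proof.
move=> HT Hg; exact: (@FP_comp k 1 _ (fun _ => g) HT (fun j _ => Hg)).
Qed.

Lemma FP2_c k T g1 g2 : FP2 T -> FP k g1 -> FP k g2 ->
  FP k (fun xs => T (g1 xs) (g2 xs)).
Proof.
move=> HT H1 H2.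
apply: (FP_ext (@FP_comp k 2 _ (fun j => if j == 0 then g1 else g2) HT _)) => //.
by move=> [|[|j]].
Qed.

Lemma FP3_c k T g1 g2 g3 : FP3 T -> FP k g1 -> FP k g2 -> FP k g3 ->
  FP k (fun xs => T (g1 xs) (g2 xs) (g3 xs)).
Proof.
move=> HT H1 H2 H3.
apply: (FP_ext (@FP_comp k 3 _
   (fun j => if j == 0 then g1 else if j == 1 then g2 else g3) HT _)) => //.
by move=> [|[|[|j]]].
Qed.

Lemma FP1_cons b : FP1 (cons b).
Proof. exact: FP_succ. Qed.

Lemma FP_const k w : FP k (fun _ => w).
Proof.
elim: w => [|b w IH]; first exact: FP_zero.
exact: (FP1_c (FP1_cons b) IH).
Qed.

Lemma FP_behead k f : FP k f -> FP k.+1 (fun xs => f (behead xs)).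
Proof.
move=> Hf; apply: (FP_ext (@FP_comp k.+1 k _ (fun j xs => nth [::] xs j.+1) Hf _)).
  by move=> j jk; apply: FP_proj.
move=> [|x ys] //= [sy]; congr f.
rewrite -{1}(mkseq_nth [::] ys) /mkseq sy.
by apply: eq_map.
Qed.

Fixpoint sumw k (xs : seq word) : word :=
  if k is k'.+1 then nth [::] xs 0 ++ sumw k' (behead xs) else [:: true; true].

Lemma size_sumw k xs : size xs = k -> size (sumw k xs) = (sumsz xs).+2.
Proof.
elim: k xs => [|k IH] [|x xs] //= [sx].
by rewrite size_cat IH // /sumsz /= addnS addnS.
Qed.

Lemma FP2_cat : FP2 cat.
Proof.
have Hb : FP 2 (fun xs => nseq (size (true :: nth [::] xs 0) *
                                 size (true :: nth [::] xs 1)) true).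
  apply: (FP2_c (T := fun a b => nseq (size a * size b) true)) FP_smash _ _.
    exact: (FP1_c (FP1_cons true) (FP_proj (isT : 0 < 2))).
  exact: (FP1_c (FP1_cons true) (FP_proj (isT : 1 < 2))).
apply: (FP_rec (g := fun xs => nth [::] xs 0)
   (h0 := fun xs => false :: nth [::] xs 1) (h1 := fun xs => true :: nth [::] xs 1) (bd := _) _ _ _ Hb).
- exact: FP_proj.
- exact: (FP1_c (FP1_cons false) (FP_proj (isT : 1 < 3))).
- exact: (FP1_c (FP1_cons true) (FP_proj (isT : 1 < 3))).
- by [].
- by [].
- by [].
- move=> xs _; rewrite size_nseq size_cat /=; nia.
Qed.

Lemma FP_sumw k : FP k (sumw k).
Proof.
elim: k => [|k IH] /=; first exact: FP_const.
exact: (FP2_c FP2_cat (FP_proj (ltn0Sn k)) (FP_behead IH)).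
Qed.

Fixpoint polyw d k (xs : seq word) : word :=
  if d is d'.+1 then nseq (size (polyw d' k xs) * size (sumw k xs)) true
  else sumw k xs.

Lemma FP_polyw d k : FP k (polyw d k).
Proof.
elim: d => [|d IH] /=; first exact: FP_sumw.
exact: (FP2_c (T := fun a b => nseq (size a * size b) true) FP_smash IH (FP_sumw k)).
Qed.

Lemma size_polyw d k xs : size xs = k -> (sumsz xs).+2 ^ d <= size (polyw d k xs).
Proof.
move=> sx; elim: d => [|d IH] /=; first by rewrite size_sumw.
by rewrite size_nseq expnSr size_sumw // leq_mul.
Qed.

Lemma FP_rec_poly k (g h0 h1 f : seq word -> word) d :
  FP k g -> FP k.+2 h0 -> FP k.+2 h1 ->
  (forall ys, size ys = k -> f ([::] :: ys) = g ys) ->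
  (forall x ys, size ys = k -> f ((false :: x) :: ys) = h0 [:: x, f (x :: ys) & ys]) ->
  (forall x ys, size ys = k -> f ((true :: x) :: ys) = h1 [:: x, f (x :: ys) & ys]) ->
  (forall xs, size xs = k.+1 -> size (f xs) <= (sumsz xs).+2 ^ d) ->
  FP k.+1 f.
Proof.
move=> Hg H0 H1 E0 E1 E2 B.
apply: (FP_rec Hg H0 H1 (FP_polyw d k.+1) E0 E1 E2).
move=> xs sx; apply: leq_trans (B xs sx) (size_polyw d sx).
Qed.

Lemma sz1 (x : word) : size x <= (sumsz [:: x]).+2 ^ 1.
Proof. by rewrite /sumsz /= addn0 expn1 -addn2 leq_addr. Qed.

Lemma nth_le_pow xs i : size (nth [::] xs i) <= (sumsz xs).+2 ^ 1.
Proof. by rewrite expn1; apply: leq_trans (size_nth_le xs i) _; rewrite -addn2 leq_addr. Qed.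

Definition ite (c a b : word) : word := if c is true :: _ then a else b.

Lemma FP3_ite : FP3 ite.
Proof.
apply: (@FP_rec_poly 2 (fun xs => nth [::] xs 1) (fun xs => nth [::] xs 3)
          (fun xs => nth [::] xs 2) _ 1) => //; try exact: FP_proj.
move=> [|c [|a [|b [|? ?]]]] // _; rewrite /ite /=.
case: c => [|[] c]; rewrite ?(nth_le_pow [:: _; a; b] 1) ?(nth_le_pow [:: _; a; b] 2) //.
Qed.

Lemma FP1_behead : FP1 behead.
Proof.
apply: (@FP_rec_poly 0 (fun _ => [::]) (fun xs => nth [::] xs 0)
          (fun xs => nth [::] xs 0) _ 1) => //; try exact: FP_proj; try exact: FP_zero.
move=> [|x [|]] //= _; apply: leq_trans (sz1 x); rewrite size_behead; exact: leq_pred.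
Qed.

Create HintDb fpdb.
#[export] Hint Resolve FP3_ite FP2_cat FP1_cons FP1_behead : fpdb.

Ltac fp := repeat first
 [ exact: FP_const
 | (apply: FP_proj; done)
 | (apply: FP3_c; first solve [eauto with fpdb nocore])
 | (apply: FP2_c; first solve [eauto with fpdb nocore])
 | (apply: FP1_c; first solve [eauto with fpdb nocore]) ].

Fixpoint takeW (w : word) : word :=
  if w is b :: x then (if b then true :: takeW x else [::]) else [::].
Fixpoint dropW (w : word) : word :=
  if w is b :: x then (if b then dropW x else w) else [::].
Definition ne (w : word) : word := if w is _ :: _ then [:: true] else [::].
Definition notw (w : word) : word := ite (ne w) [::] [:: true].
Definition andw (a b : word) : word := ite a b [::].
Fixpoint dbl (w : word) : word := if w is _ :: x then true :: true :: dbl x else [::].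
Fixpoint par (w : word) : word := if w is _ :: x then notw (par x) else [::].
Fixpoint half (w : word) : word :=
  if w is _ :: x then ite (par x) (true :: half x) (half x) else [::].

Lemma size_takeW w : size (takeW w) <= size w.
Proof. elim: w => [|[] w IH] //=. Qed.
Lemma size_dropW w : size (dropW w) <= size w.
Proof. elim: w => [|[] w IH] //=; exact: leqW. Qed.

Lemma FP1_takeW : FP1 takeW.
Proof.
apply: (@FP_rec_poly 0 (fun _ => [::]) (fun _ => [::])
          (fun xs => true :: nth [::] xs 1) _ 1) => //; try exact: FP_zero.
  by fp.
move=> [|x [|]] //= _; apply: leq_trans (sz1 x); exact: size_takeW.
Qed.

Lemma FP1_dropW : FP1 dropW.
Proof.
apply: (@FP_rec_poly 0 (fun _ => [::]) (fun xs => false :: nth [::] xs 0)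
          (fun xs => nth [::] xs 1) _ 1) => //; try exact: FP_zero.
- by fp.
- by fp.
move=> [|x [|]] //= _; apply: leq_trans (sz1 x); exact: size_dropW.
Qed.

Lemma FP1_ne : FP1 ne.
Proof.
apply: (@FP_rec_poly 0 (fun _ => [::]) (fun _ => [:: true])
          (fun _ => [:: true]) _ 1) => //; try exact: FP_const.
move=> [|x [|]] //= _; rewrite /ne; case: x => //= *; rewrite expn1 //.
Qed.
#[export] Hint Resolve FP1_takeW FP1_dropW FP1_ne : fpdb.

Lemma FP1_notw : FP1 notw.
Proof. rewrite /FP1 /notw; fp. Qed.
Lemma FP2_andw : FP2 andw.
Proof. rewrite /FP2 /andw; fp. Qed.
#[export] Hint Resolve FP1_notw FP2_andw : fpdb.

Lemma size_dbl w : size (dbl w) = (size w).*2.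
Proof. elim: w => [|b w IH] //=; by rewrite IH doubleS. Qed.

Lemma FP1_dbl : FP1 dbl.
Proof.
apply: (@FP_rec_poly 0 (fun _ => [::]) (fun xs => true :: true :: nth [::] xs 1)
          (fun xs => true :: true :: nth [::] xs 1) _ 2) => //; try exact: FP_zero.
- by fp.
- by fp.
move=> [|x [|]] //= _; rewrite size_dbl /sumsz /= addn0 -muln2; nia.
Qed.

Lemma size_par w : size (par w) <= 1.
Proof. elim: w => [|b w IH] //=; rewrite /notw; case: (par w) => [|[] ?] //. Qed.

Lemma FP1_par : FP1 par.
Proof.
apply: (@FP_rec_poly 0 (fun _ => [::]) (fun xs => notw (nth [::] xs 1))
          (fun xs => notw (nth [::] xs 1)) _ 1) => //; try exact: FP_zero.
- by fp.
- by fp.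
move=> [|x [|]] //= _; apply: leq_trans (size_par _) _; by rewrite expn1.
Qed.
#[export] Hint Resolve FP1_dbl FP1_par : fpdb.

Lemma size_half_le w : size (half w) <= size w.
Proof. elim: w => [|b w IH] //=; case: (par w) => [|[] ?] //=; exact: leqW. Qed.

Lemma FP1_half : FP1 half.
Proof.
apply: (@FP_rec_poly 0 (fun _ => [::])
    (fun xs => ite (par (nth [::] xs 0)) (true :: nth [::] xs 1) (nth [::] xs 1))
    (fun xs => ite (par (nth [::] xs 0)) (true :: nth [::] xs 1) (nth [::] xs 1)) _ 1)
   => //; try exact: FP_zero.
- by fp.
- by fp.
move=> [|x [|]] //= _; apply: leq_trans (sz1 x); exact: size_half_le.
Qed.
#[export] Hint Resolve FP1_half : fpdb.

Lemma size_iter_le (T : word -> word) n y :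
  (forall y, size (T y) <= size y) -> size (iter n T y) <= size y.
Proof. move=> H; elim: n => [|n IH] //=; exact: leq_trans (H _) IH. Qed.

Lemma FP_iter (T : word -> word) : FP1 T -> (forall y, size (T y) <= size y) ->
  FP2 (fun c y => iter (size c) T y).
Proof.
move=> HT HS.
apply: (@FP_rec_poly 1 (fun xs => nth [::] xs 0) (fun xs => T (nth [::] xs 1))
          (fun xs => T (nth [::] xs 1)) _ 1) => //.
  all: try exact: FP_proj; try exact: (FP1_c HT (FP_proj (isT : 1 < 3))).
move=> xs; case: xs => [|c [|y [|? ?]]] //= _; apply: leq_trans (size_iter_le _ _ HS) _.
exact: (nth_le_pow [:: c; y] 1).
Qed.

Fixpoint loopw (body : seq word -> word) (c : word) (ps : seq word) : word :=
  if c is _ :: x then loopw body x ps ++ body (x :: ps) else [::].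

Lemma loop_size body c ps B :
  (forall x, size x <= size c -> size (body (x :: ps)) <= B) ->
  size (loopw body c ps) <= size c * B.
Proof.
elim: c => [|b c IH] H //=; rewrite size_cat mulSn addnC.
apply: leq_add; first by apply: H; exact: leqW.
by apply: IH => x xc; apply: H; exact: leqW.
Qed.

Lemma map_iota_shift (T : Type) (f : nat -> T) m n :
  [seq f j | j <- iota m.+1 n] = [seq f j.+1 | j <- iota m n].
Proof. by elim: n m => //= n IH m; rewrite IH. Qed.

Lemma FP_skip1 k (h : seq word -> word) : FP k.+1 h ->
  FP k.+2 (fun xs => h (nth [::] xs 0 :: drop 2 xs)).
Proof.
move=> Hh.
apply: (FP_ext (@FP_comp k.+2 k.+1 _
    (fun j xs => nth [::] xs (if j == 0 then 0 else j.+1)) Hh _)).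
  move=> [|j] jk; apply: FP_proj => //.
move=> [|x [|r ys]] //= [sy]; congr h; congr cons.
rewrite map_iota_shift -{1}(mkseq_nth [::] ys) /mkseq sy.
by rewrite drop0; apply: eq_map.
Qed.

Lemma FP_loop k body : FP k.+1 body ->
  FP k.+1 (fun xs => loopw body (nth [::] xs 0) (behead xs)).
Proof.
move=> Hb; have [d Hd] := FP_poly Hb.
have Hh : FP k.+2 (fun xs => nth [::] xs 1 ++ body (nth [::] xs 0 :: drop 2 xs)).
  exact: (FP2_c FP2_cat (FP_proj (isT : 1 < k.+2)) (FP_skip1 Hb)).
apply: (@FP_rec_poly k (fun _ => [::]) _ _ _ d.+1 (FP_zero k) Hh Hh) => //.
- by move=> x ys _ /=; rewrite drop0.
- by move=> x ys _ /=; rewrite drop0.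
move=> [|c ps] //= [sp].
apply: leq_trans (loop_size (B := (sumsz (c :: ps)).+2 ^ d) _) _.
  move=> x xc; apply: leq_trans (Hd (x :: ps) _) _; first by rewrite /= sp.
  apply: exp_mono_base; rewrite /sumsz /= !ltnS; exact: leq_add.
rewrite expnS leq_mul2r; apply/orP; right.
rewrite /sumsz /= -addn2 -addnA; exact: leq_addr.
Qed.

Lemma FP_loopA body : FP 2 body -> FP2 (fun c z => loopw body c [:: z]).
Proof.
move=> Hb; apply: (FP_ext (FP_loop Hb)).
by move=> [|c [|z [|? ?]]].
Qed.

Lemma FP_loopB body : FP 3 body -> FP3 (fun c d z => loopw body c [:: d; z]).
Proof.
move=> Hb; apply: (FP_ext (FP_loop Hb)).
by move=> [|c [|d [|z [|? ?]]]].
Qed.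

Definition drop2 (w : word) := behead (behead w).
Definition drop4 (w : word) := drop2 (drop2 w).
Lemma FP1_drop2 : FP1 drop2. Proof. rewrite /FP1 /drop2; fp. Qed.
#[export] Hint Resolve FP1_drop2 : fpdb.
Lemma FP1_drop4 : FP1 drop4. Proof. rewrite /FP1 /drop4; fp. Qed.
#[export] Hint Resolve FP1_drop4 : fpdb.

Lemma size_drop2 w : size (drop2 w) <= size w.
Proof. by case: w => [|? [|? ?]] //=; rewrite leqW. Qed.

Lemma size_ite_le c a b n : size a <= n -> size b <= n -> size (ite c a b) <= n.
Proof. by case: c => [|[] ?]. Qed.

Definition nextN (w : word) := ite w (drop2 (dropW (drop2 w))) w.
Lemma FP1_nextN : FP1 nextN. Proof. rewrite /FP1 /nextN; fp. Qed.
Lemma size_nextN w : size (nextN w) <= size w.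
Proof.
apply: size_ite_le => //; apply: leq_trans (size_drop2 _) _.
apply: leq_trans (size_dropW _) _; exact: size_drop2.
Qed.
Definition itN (c y : word) := iter (size c) nextN y.
Lemma FP2_itN : FP2 itN. Proof. exact: (FP_iter FP1_nextN size_nextN). Qed.
#[export] Hint Resolve FP1_nextN FP2_itN : fpdb.

Definition natbody (xs : seq word) : word :=
  ite (itN (nth [::] xs 0) (nth [::] xs 1))
    ([:: true; false; true; false] ++
       takeW (drop2 (itN (nth [::] xs 0) (nth [::] xs 1))) ++ [:: false; true; false; true])
    [::].
Lemma FP_natbody : FP 2 natbody. Proof. rewrite /natbody; fp. Qed.
Definition natsL (c z : word) := loopw natbody c [:: z].
Lemma FP2_natsL : FP2 natsL. Proof. exact: (FP_loopA FP_natbody). Qed.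
#[export] Hint Resolve FP2_natsL : fpdb.
Definition natsLoop (z : word) := natsL z z.
Lemma FP1_natsLoop : FP1 natsLoop. Proof. rewrite /FP1 /natsLoop; fp. Qed.
#[export] Hint Resolve FP1_natsLoop : fpdb.

Definition nextE (w : word) := ite w (drop2 (itN w (drop2 w))) w.
Lemma FP1_nextE : FP1 nextE. Proof. rewrite /FP1 /nextE; fp. Qed.
Lemma size_nextE w : size (nextE w) <= size w.
Proof.
apply: size_ite_le => //; apply: leq_trans (size_drop2 _) _.
apply: leq_trans (size_iter_le _ _ size_nextN) _; exact: size_drop2.
Qed.
Definition itE (c y : word) := iter (size c) nextE y.
Lemma FP2_itE : FP2 itE. Proof. exact: (FP_iter FP1_nextE size_nextE). Qed.
#[export] Hint Resolve FP1_nextE FP2_itE : fpdb.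

Definition edgebody (xs : seq word) : word :=
  ite (itE (nth [::] xs 0) (nth [::] xs 1))
    ([:: true; false] ++ natsLoop (drop2 (itE (nth [::] xs 0) (nth [::] xs 1)))
       ++ [:: false; true])
    [::].
Lemma FP_edgebody : FP 2 edgebody. Proof. rewrite /edgebody; fp. Qed.
Definition edgesL (c z : word) := loopw edgebody c [:: z].
Lemma FP2_edgesL : FP2 edgesL. Proof. exact: (FP_loopA FP_edgebody). Qed.
#[export] Hint Resolve FP2_edgesL : fpdb.
Definition edgesLoop (z : word) := edgesL z z.

Definition Fw (w1 : word) : word :=
  [:: true; false; true; false] ++ takeW (drop4 w1) ++ [:: false; true; true; false] ++
  edgesLoop (drop2 (drop2 (dropW (drop4 w1)))) ++ [:: false; true; false; true].
Lemma FP1_Fw : FP1 Fw. Proof. rewrite /FP1 /Fw /edgesLoop; fp. Qed.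

Definition dropn (a b : word) := iter (size a) behead b.
Lemma FP2_dropn : FP2 dropn.
Proof. apply: (FP_iter FP1_behead) => y; rewrite size_behead; exact: leq_pred. Qed.
#[export] Hint Resolve FP2_dropn : fpdb.
Definition eqlen (a b : word) :=
  andw (notw (ne (dropn a b))) (notw (ne (dropn b a))).
Lemma FP2_eqlen : FP2 eqlen. Proof. rewrite /FP2 /eqlen; fp. Qed.
#[export] Hint Resolve FP2_eqlen : fpdb.

Definition membody (xs : seq word) : word :=
  ite (itN (nth [::] xs 0) (nth [::] xs 2))
    (ite (eqlen (takeW (drop2 (itN (nth [::] xs 0) (nth [::] xs 2)))) (nth [::] xs 1))
       [:: true] [::]) [::].
Lemma FP_membody : FP 3 membody. Proof. rewrite /membody; fp. Qed.
Definition memL (c d z : word) := loopw membody c [:: d; z].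
Lemma FP3_memL : FP3 memL. Proof. exact: (FP_loopB FP_membody). Qed.
#[export] Hint Resolve FP3_memL : fpdb.
Definition memw (d w : word) := ne (memL w d w).
Lemma FP2_memw : FP2 memw. Proof. rewrite /FP2 /memw; fp. Qed.
#[export] Hint Resolve FP2_memw : fpdb.

Definition cbody (xs : seq word) : word :=
  ite (memw (dbl (nth [::] xs 0)) (nth [::] xs 1)) [::]
    ([:: true; false] ++ dbl (nth [::] xs 0) ++ [:: false; true]).
Lemma FP_cbody : FP 2 cbody. Proof. rewrite /cbody; fp. Qed.
Definition compL (c z : word) := loopw cbody c [:: z].
Lemma FP2_compL : FP2 compL. Proof. exact: (FP_loopA FP_cbody). Qed.
#[export] Hint Resolve FP2_compL : fpdb.

Definition Gw (w1 w2 : word) : word :=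
  [:: true; false] ++ compL (half (takeW (drop4 w1))) (drop2 w2) ++ [:: false; true].
Lemma FP2_Gw : FP2 Gw. Proof. rewrite /FP2 /Gw; fp. Qed.

Lemma fl2 v : flatten (nseq v [:: true; true]) = nseq v.*2 true.
Proof. by elim: v => //= v IH; rewrite IH. Qed.

Lemma enc_natE v : enc_nat v = true :: false :: nseq v.*2 true ++ [:: false; true].
Proof. by rewrite /enc_nat fl2. Qed.

Lemma takeW_nseq m r : takeW (nseq m true ++ false :: r) = nseq m true.
Proof. by elim: m => //= m ->. Qed.
Lemma dropW_nseq m r : dropW (nseq m true ++ false :: r) = false :: r.
Proof. by elim: m. Qed.

Lemma nextN_nat v r : nextN (enc_nat v ++ r) = r.
Proof. by rewrite enc_natE /nextN /= /drop2 /= -catA dropW_nseq. Qed.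
Lemma nextN_f r : nextN (false :: r) = false :: r.
Proof. by []. Qed.

Lemma drop_S (A : Type) (s : seq A) j : drop j.+1 s = behead (drop j s).
Proof. by elim: s j => [|a s IH] [|j] //=; rewrite drop0. Qed.

Lemma iter_flat (A : Type) (e : A -> word) (nx : word -> word) s r j :
  (forall a r, nx (e a ++ r) = r) -> (forall r, nx (false :: r) = false :: r) ->
  iter j nx (flatten (map e s) ++ false :: r) = flatten (map e (drop j s)) ++ false :: r.
Proof.
move=> H1 H2; elim: j => [|j IH]; first by rewrite drop0.
rewrite iterS IH drop_S; case: (drop j s) => [|a s'] //=.
by rewrite -catA H1.
Qed.

Lemma loopw_iota body c ps (B : nat -> word) :
  (forall x, body (x :: ps) = B (size x)) ->
  loopw body c ps = flatten [seq B j | j <- iota 0 (size c)].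
Proof.
move=> H; elim: c => [|b c IH] //.
change (loopw body (b :: c) ps) with (loopw body c ps ++ body (c :: ps)).
have -> : size (b :: c) = size c + 1 by rewrite addn1.
by rewrite IH H iotaD map_cat flatten_cat /= cats0.
Qed.

Lemma flat_iota_nil (A : Type) (a0 : A) (W : A -> word) s m i :
  size s <= i ->
  flatten [seq (if j < size s then W (nth a0 s j) else [::]) | j <- iota i m] = [::].
Proof.
elim: m i => [|m IH] i //= Hi.
by rewrite ltnNge Hi /= IH // leqW.
Qed.

Lemma flat_iota_nth (A : Type) (a0 : A) (W : A -> word) s L :
  size s <= L ->
  flatten [seq (if j < size s then W (nth a0 s j) else [::]) | j <- iota 0 L] =
  flatten (map W s).
Proof.
move=> sL; rewrite -(subnKC sL) iotaD map_cat flatten_cat.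
have -> : flatten [seq (if j < size s then W (nth a0 s j) else [::])
                  | j <- iota (0 + size s) (L - size s)] = [::].
  rewrite add0n; exact: flat_iota_nil.
rewrite cats0 -{4}(mkseq_nth a0 s) /mkseq map_comp; congr flatten.
rewrite map_id -map_comp; apply/eq_in_map => j; rewrite mem_iota add0n => /andP[_ ->] //.
Qed.

Lemma size_flat_ge (A : Type) (e : A -> word) s :
  (forall a, 0 < size (e a)) -> size s <= size (flatten (map e s)).
Proof.
move=> H; elim: s => //= a s IH; rewrite size_cat.
by rewrite -add1n leq_add.
Qed.

Lemma natsLoopE s r :
  natsLoop (flatten (map enc_nat s) ++ false :: r) =
  flatten (map (fun v => enc_seq enc_nat [:: v]) s).
Proof.
rewrite /natsLoop /natsL.
set z := flatten (map enc_nat s) ++ false :: r.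
rewrite (@loopw_iota natbody z [:: z] (fun j => if j < size s then
            enc_seq enc_nat [:: nth 0 s j] else [::])).
  apply: flat_iota_nth; rewrite /z size_cat.
  apply: leq_trans (size_flat_ge _ _) (leq_addr _ _).
  by move=> a.
move=> x; rewrite /natbody /= /itN /z (iter_flat _ _ _ nextN_nat nextN_f).
case: ltnP => xs.
  rewrite (drop_nth 0 xs) /= /drop2 /= fl2 -!catA takeW_nseq.
  by rewrite /enc_seq /= fl2 cats0 -catA.
by rewrite drop_oversize.
Qed.

Lemma size_flat_nat s : size s <= size (flatten (map enc_nat s)).
Proof. by apply: size_flat_ge => a. Qed.

Lemma nextE_edge e r : nextE (enc_seq enc_nat e ++ r) = r.
Proof.
rewrite /nextE /enc_seq /= /drop2 /=.
rewrite -catA /itN (iter_flat _ _ _ nextN_nat nextN_f) drop_oversize //.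
rewrite /= size_cat; apply: leq_trans (size_flat_nat e) _; apply: leqW; apply: leqW; exact: leq_addr.
Qed.
Lemma nextE_f r : nextE (false :: r) = false :: r.
Proof. by []. Qed.

Definition wrapE (e : seq nat) : word :=
  enc_seq (enc_seq enc_nat) (map (fun v => [:: v]) e).

Lemma edgesLoopE E r :
  edgesLoop (flatten (map (enc_seq enc_nat) E) ++ false :: r) =
  flatten (map wrapE E).
Proof.
rewrite /edgesLoop /edgesL.
set z := flatten (map (enc_seq enc_nat) E) ++ false :: r.
rewrite (@loopw_iota edgebody z [:: z] (fun j => if j < size E then
            wrapE (nth [::] E j) else [::])).
  apply: flat_iota_nth; rewrite /z size_cat.
  apply: leq_trans (size_flat_ge _ _) (leq_addr _ _).
  by move=> a.
move=> x; rewrite /edgebody /= /itE /z (iter_flat _ _ _ nextE_edge nextE_f).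
case: ltnP => xs.
  rewrite (drop_nth [::] xs) /= /drop2 /= -!catA natsLoopE.
  by rewrite /wrapE /enc_seq -map_comp.
by rewrite drop_oversize.
Qed.

Lemma FwE n E :
  Fw (enc_pair enc_nat (enc_seq (enc_seq enc_nat)) (n, E)) =
  enc_pair enc_nat (enc_seq (enc_seq (enc_seq enc_nat)))
    (n, map (map (fun v => [:: v])) E).
Proof.
rewrite /Fw /enc_pair /= fl2 /drop4 /drop2 /= -!catA takeW_nseq dropW_nseq /=.
rewrite edgesLoopE /wrapE /enc_seq -map_comp /=.
by rewrite /w_close; congr (_ :: _ :: _ :: _ :: _ ++ _ :: _ :: _ :: _ :: flatten _ ++ _).
Qed.

Lemma iter_behead n (b : word) : iter n behead b = drop n b.
Proof. by elim: n => [|n IH]; rewrite ?drop0 // iterS IH drop_S. Qed.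

Lemma eqlenE a b : eqlen a b = if size a == size b then [:: true] else [::].
Proof.
rewrite /eqlen /dropn !iter_behead.
have ne_drop : forall m (w : word), ne (drop m w) = if size w <= m then [::] else [:: true].
  move=> m w; rewrite /ne; case: ltnP => H.
    by case E: (drop m w) => //; move: H; rewrite -subn_gt0 -size_drop E.
  by rewrite drop_oversize.
rewrite !ne_drop eqn_leq.
by case: (size b <= size a); case: (size a <= size b).
Qed.

Lemma ne_flat (A : Type) (W : A -> word) s (P : pred A) :
  (forall a, W a = if P a then [:: true] else [::]) ->
  ne (flatten (map W s)) = if has P s then [:: true] else [::].
Proof.
move=> H; elim: s => //= a s IH; rewrite H; case: (P a) => //.
Qed.

Lemma memwE d s :
  memw d (flatten (map enc_nat s) ++ [:: false; true]) =
  if has (fun v => v.*2 == size d) s then [:: true] else [::].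
Proof.
rewrite /memw /memL.
set z := flatten (map enc_nat s) ++ [:: false; true].
pose W := fun v : nat => if v.*2 == size d then [:: true] else [::].
rewrite (@loopw_iota membody z [:: d; z] (fun j => if j < size s then
            W (nth 0 s j) else [::])).
  rewrite (@flat_iota_nth _ 0 W); first by apply: ne_flat.
  rewrite /z size_cat; apply: leq_trans (size_flat_nat s) (leq_addr _ _).
move=> x; rewrite /membody /= /itN /z (iter_flat _ _ _ nextN_nat nextN_f).
case: ltnP => xs.
  rewrite (drop_nth 0 xs) /= /drop2 /= fl2 -!catA takeW_nseq eqlenE size_nseq.
  by rewrite /W; case: eqP.
by rewrite drop_oversize.
Qed.

Lemma dbl_nseq x : dbl x = nseq (size x).*2 true.
Proof. by elim: x => //= b x ->. Qed.

Definition comp n (s : seq nat) := [seq j <- iota 0 n | j \notin s].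

Lemma flat_filter (A : Type) (f : A -> word) (P : pred A) l :
  flatten [seq (if P j then [::] else f j) | j <- l] =
  flatten (map f [seq j <- l | ~~ P j]).
Proof. by elim: l => //= a l IH; case: (P a) => //=; rewrite IH. Qed.

Lemma compLE c s :
  compL c (flatten (map enc_nat s) ++ [:: false; true]) =
  flatten (map enc_nat (comp (size c) s)).
Proof.
rewrite /compL (@loopw_iota cbody _ _ (fun j => if j \in s then [::] else enc_nat j)).
  by rewrite flat_filter.
move=> x; rewrite /cbody /= memwE dbl_nseq size_nseq.
have -> : has (fun v => v.*2 == (size x).*2) s = (size x \in s).
  rewrite -has_pred1; apply: eq_has => v /=; exact: (inj_eq double_inj).
by case: (size x \in s); rewrite // enc_natE.
Qed.

Lemma par_odd w : par w = if odd (size w) then [:: true] else [::].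
Proof. by elim: w => //= b w ->; case: (odd (size w)). Qed.

Lemma size_half w : size (half w) = (size w)./2.
Proof.
elim: w => //= b w IH; rewrite par_odd.

by rewrite uphalf_half; case O: (odd (size w)) => /=; rewrite IH.
Qed.

Lemma GwE (B : Type) (eb : B -> word) n E s :
  Gw (enc_pair enc_nat eb (n, E)) (enc_seq enc_nat s) = enc_seq enc_nat (comp n s).
Proof.
rewrite /Gw /enc_pair /= fl2 /drop4 /drop2 /= -!catA takeW_nseq.
rewrite -[flatten (map enc_nat s) ++ _]/(flatten (map enc_nat s) ++ [:: false; true]).
by rewrite compLE size_half size_nseq doubleK.
Qed.

Lemma comp_range n s : is_subset_of_range n (comp n s).
Proof.
apply/andP; split.
  apply: sorted_filter; [exact: ltn_trans | exact: iota_ltn_sorted].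
by apply/allP => v; rewrite mem_filter mem_iota add0n => /andP[_ /andP[_ ->]].
Qed.

Lemma mem_comp n s v : (v \in comp n s) = (v < n) && (v \notin s).
Proof. by rewrite mem_filter mem_iota add0n /= andbC. Qed.

Lemma range_lt n A v : is_subset_of_range n A -> v \in A -> v < n.
Proof. by case/andP => _ /allP H /H. Qed.

Lemma range_eq n A1 A2 : is_subset_of_range n A1 -> is_subset_of_range n A2 ->
  A1 =i A2 -> A1 = A2.
Proof.
move=> /andP[s1 _] /andP[s2 _]; apply: irr_sorted_eq s1 s2 => //.
  exact: ltn_trans.
by move=> x; exact: ltnn.
Qed.

Lemma comp_inj n A1 A2 : is_subset_of_range n A1 -> is_subset_of_range n A2 ->
  comp n A1 = comp n A2 -> A1 = A2.
Proof.
move=> r1 r2 E; apply: (range_eq r1 r2) => v.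
have := congr1 (fun s => v \in s) E; rewrite /= !mem_comp.
case L: (v < n) => /=.
  by move/negb_inj.
case V1: (v \in A1); first by rewrite (range_lt r1 V1) in L.
case V2: (v \in A2) => //; by rewrite (range_lt r2 V2) in L.
Qed.

Lemma comp_comp n T : is_subset_of_range n T -> comp n (comp n T) = T.
Proof.
move=> r; apply: (range_eq (comp_range _ _) r) => v.
rewrite !mem_comp negb_and negbK.
case L: (v < n) => //=.
case V: (v \in T) => //; by rewrite (range_lt r V) in L.
Qed.

Section Sem.
Variables (n : nat) (E : seq (seq nat)).
Hypothesis HE : all (fun e => all (fun v => v < n) e) E.

Lemma edge_lt e v : e \in E -> v \in e -> v < n.
Proof. by move=> eE ve; exact: (allP (allP HE e eE) v ve). Qed.

Lemma L1 A : acnf_maxsat (n, E) A -> in_Tr (n, E) (comp n A).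
Proof.
case=> /= rA sA mA; split => /=; first exact: comp_range.
  apply/allP => e eE; have /hasP [v ve vA] := allP sA e eE.
  by apply/hasP; exists v => //; rewrite mem_comp vA andbT (edge_lt eE ve).
move=> T' rT' sub tT' v; rewrite mem_comp => /andP[vn vA].
have sub2 : {subset A <= comp n T'}.
  move=> u uA; rewrite mem_comp (range_lt rA uA) /=; apply/negP => uT.
  by have := sub u uT; rewrite mem_comp uA andbF.
have sat2 : acnf_sat E (comp n T').
  apply/allP => e eE; have /hasP [u ue uT] := allP tT' e eE.
  by apply/hasP; exists u => //; rewrite mem_comp uT andbF.
have H := mA _ (comp_range _ _) sub2 sat2.
apply/negPn/negP => vT.
have : v \in comp n T' by rewrite mem_comp vn vT.
by move/H; rewrite (negbTE vA).
Qed.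

Lemma L2 T : in_Tr (n, E) T -> acnf_maxsat (n, E) (comp n T).
Proof.
case=> /= rT tT mT; split => /=; first exact: comp_range.
  apply/allP => e eE; have /hasP [v ve vT] := allP tT e eE.
  by apply/hasP; exists v => //; rewrite mem_comp vT andbF.
move=> A' rA' sub sA' v vA'.
have sub2 : {subset comp n A' <= T}.
  move=> u; rewrite mem_comp => /andP[un uA']; apply/negPn/negP => uT.
  have : u \in comp n T by rewrite mem_comp un uT.
  by move/sub; rewrite (negbTE uA').
have tr2 : Defs.is_transversal E (comp n A').
  apply/allP => e eE; have /hasP [u ue uA] := allP sA' e eE.
  by apply/hasP; exists u => //; rewrite mem_comp uA andbT (edge_lt eE ue).
have H := mT _ (comp_range _ _) sub2 tr2.
rewrite mem_comp (range_lt rA' vA') /=; apply/negP => vT.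
by have := H v vT; rewrite mem_comp vA' andbF.
Qed.

Lemma Tr_shift T : in_Tr (n.+1, E) T <-> in_Tr (n, E) T.
Proof.
split.
  case=> /= rT tT mT.
  have rT' : is_subset_of_range n [seq v <- T | v < n].
    apply/andP; split.
      apply: sorted_filter; [exact: ltn_trans | by case/andP: rT].
    by apply/allP => v; rewrite mem_filter => /andP[].
  have tr2 : Defs.is_transversal E [seq v <- T | v < n].
    apply/allP => e eE; have /hasP [u ue uT] := allP tT e eE.
    by apply/hasP; exists u => //; rewrite mem_filter uT (edge_lt eE ue).
  have sub : {subset [seq v <- T | v < n] <= T}.
    by move=> v; rewrite mem_filter => /andP[].
  have rr : is_subset_of_range n.+1 [seq v <- T | v < n].
    case/andP: rT' => s1 /allP a1; apply/andP; split => //.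
    by apply/allP => v /a1 /ltnW.
  have H := mT _ rr sub tr2.
  have rn : is_subset_of_range n T.
    case/andP: rT => s1 _; apply/andP; split => //.
    by apply/allP => v /H; rewrite mem_filter => /andP[].
  split => //= T' rT'' sub' tT'.
  apply: mT => //; case/andP: rT'' => s1 /allP a1; apply/andP; split => //.
  by apply/allP => v /a1 /ltnW.
case=> /= rT tT mT.
have rT1 : is_subset_of_range n.+1 T.
  case/andP: rT => s1 /allP a1; apply/andP; split => //.
  by apply/allP => v /a1 /ltnW.
split => //= T' rT' sub tT'.
apply: mT => //; case/andP: rT' => s1 _; apply/andP; split => //.
by apply/allP => v /sub /(range_lt rT).
Qed.

End Sem.

Lemma sat_eq E A : wa3ns_sat (map (map (fun v => [:: v])) E) A = acnf_sat E A.
Proof.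
rewrite /wa3ns_sat all_map; apply: eq_all => c /=.
by rewrite has_map; apply: eq_has => v /=; rewrite andbT.
Qed.

Lemma maxsat_eq n E A :
  wa3ns_maxsat (n, map (map (fun v => [:: v])) E) A <-> acnf_maxsat (n, E) A.
Proof.
split; case=> /= r s m; split => //=.
- by rewrite -sat_eq.
- by move=> A' r' sub s'; apply: m => //; rewrite sat_eq.
- by rewrite sat_eq.
- by move=> A' r' sub s'; apply: m => //; rewrite -sat_eq.
Qed.

Lemma valid_lift n E : all (fun e => all (fun v => v < n) e) E ->
  all (fun e => all (fun v => v < n.+1) e) E.
Proof.
move=> /allP H; apply/allP => e /H /allP H'; apply/allP => v /H' /ltnW //.
Qed.

Theorem lemma14 :
  [/\ parsimonious_reduction EnumMaxSatAntiCNF TransversalHypergraph,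
      parsimonious_reduction TransversalHypergraph EnumMaxSatAntiCNF &
      parsimonious_reduction TransversalHypergraph EnumMaxSatWA3NS].
Proof.
split.
- exists (fun I : acnf_inst => ((I.1).+1, I.2) : hyp_inst), (fun I T => comp I.1 T).
  split; [|split].
  + exists (fun xs => [:: true; false; true; false; true; true] ++ drop4 (nth [::] xs 0)).
    split; first by fp.
    move=> [n F] _ /=; rewrite /enc_pair /= !fl2 /drop4 /drop2 /=.
    by rewrite -!catA.
  + exists (fun xs => Gw (nth [::] xs 0) (nth [::] xs 1)); split; first exact: FP2_Gw.
    by move=> [n F] s _ _ /=; rewrite GwE.
  + move=> [n F] /= HF; split => /=.
    * by split => //; apply: valid_lift.
    * by move=> T /(@Tr_shift n F HF _) /(L2 HF).
    * move=> T1 T2 /(@Tr_shift n F HF _) H1 /(@Tr_shift n F HF _) H2.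
      case: H1 H2 => r1 _ _ [r2 _ _]; exact: comp_inj.
    * move=> A HA; exists (comp n A); last by case: HA => r _ _; rewrite comp_comp.
      by apply/(@Tr_shift n F HF _); apply: L1.
- exists (fun I : hyp_inst => I : acnf_inst), (fun I A => comp I.1 A).
  split; [|split].
  + exists (fun xs => nth [::] xs 0); split; first exact: FP_proj.
    by [].
  + exists (fun xs => Gw (nth [::] xs 0) (nth [::] xs 1)); split; first exact: FP2_Gw.
    by move=> [n E] s _ _ /=; rewrite GwE.
  + move=> [n E] /= [_ HE]; split => /=.
    * exact: HE.
    * by move=> A /(L1 HE).
    * move=> A1 A2 [r1 _ _] [r2 _ _]; exact: comp_inj.
    * move=> T HT; exists (comp n T); first exact: L2.
      by case: HT => r _ _; rewrite comp_comp.
- exists (fun I : hyp_inst => (I.1, map (map (fun v => [:: v])) I.2) : wa3ns_inst),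
         (fun I A => comp I.1 A).
  split; [|split].
  + exists (fun xs => Fw (nth [::] xs 0)); split; first exact: FP1_Fw.
    by move=> [n E] _ /=; rewrite FwE.
  + exists (fun xs => Gw (nth [::] xs 0) (nth [::] xs 1)); split; first exact: FP2_Gw.
    by move=> [n E] s _ _ /=; rewrite GwE.
  + move=> [n E] /= [_ HE]; split => /=.
    * rewrite /wa3ns_valid /= all_map; apply/allP => e eE /=.
      rewrite all_map; apply/allP => v ve /=; rewrite andbT.
      exact: (allP (allP HE e eE) v ve).
    * by move=> A /maxsat_eq /(L1 HE).
    * move=> A1 A2 [r1 _ _] [r2 _ _]; exact: comp_inj.
    * move=> T HT; exists (comp n T); first by apply/maxsat_eq; exact: L2.
      by case: HT => r _ _; rewrite comp_comp.
Qed.
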